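(* For every $\Delta > 0$ there exists a constant $c > 0$ such that the following holds for all sufficiently large $M$. Let $|\Psi_1\rangle$ be any normalized state of $M$ qubits that is a linear combination of tensor products $|s_1\rangle\otimes\cdots\otimes|s_M\rangle$ with each $|s_i\rangle\in\{|+\rangle,|-\rangle\}$, where every term appearing with nonzero coefficient has at most $r = cM$ factors equal to $|-\rangle$. Then measuring $|\Psi_1\rangle$ in the computational basis $\{|0\rangle,|1\rangle\}^{\otimes M}$ yields, with high probability, an outcome string $y\in\{0,1\}^M$ whose Hamming weight lies between $M(1/2-\Delta)$ and $M(1/2+\Delta)$. Here ''with high probability'' means that the probability of obtaining a string of weight outside this range is bounded by a quantity independent of the particular state $|\Psi_1\rangle$ that tends to $0$ as $M\to\infty$.
   Context: The single-qubit states are $|\pm\rangle = (|0\rangle \pm |1\rangle)/\sqrt{2}$, so that $|0\rangle = (|+\rangle+|-\rangle)/\sqrt{2}$ and $|1\rangle = (|+\rangle-|-\rangle)/\sqrt{2}$. The Hamming weight of $y\in\{0,1\}^M$ is the number of coordinates equal to $1$. Measuring in the computational basis gives outcome $y$ with probability $|\langle y|\Psi_1\rangle|^2$. *)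

(* Defs.v *)
From HB Require Import structures.
From mathcomp Require Import all_boot all_order all_algebra all_reals complex.
Set Implicit Arguments. Unset Strict Implicit. Unset Printing Implicit Defensive.
Import Order.TTheory GRing.Theory Num.Theory.
Local Open Scope ring_scope.

(* Complex numbers are R[i] for R : realType.  An M-qubit state is given by
   its amplitudes in the computational basis: psi y = <y|Psi>, where
   y : {ffun 'I_M -> bool} (true = |1>). *)

Definition bits (M : nat) := {ffun 'I_M -> bool}.

Definition sqnorm (R : realType) (z : R[i]) : R :=
  let: Complex a b := z in a ^+ 2 + b ^+ 2.

(* single-qubit states |+> and |->, as amplitude vectors: index false = |0>, true = |1> *)
Definition ket_plus (R : realType) (y : bool) : R[i] :=
  (Complex (Num.sqrt 2)^-1 0).
Definition ket_minus (R : realType) (y : bool) : R[i] :=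
  if y then - (Complex (Num.sqrt 2)^-1 0) else Complex (Num.sqrt 2)^-1 0.

(* the product state |s_1> (x) ... (x) |s_M>, s i = true meaning |s_i> = |->,
   written in the computational basis *)
Definition xket (R : realType) (M : nat) (s : bits M) (y : bits M) : R[i] :=
  \prod_(i < M) (if s i then ket_minus R (y i) else ket_plus R (y i)).

Definition hweight (M : nat) (y : bits M) : nat := #|[set i | y i]|.

Definition normalized (R : realType) (M : nat) (psi : bits M -> R[i]) : Prop :=
  \sum_(y : bits M) sqnorm (psi y) = 1.

Definition in_minus_span (R : realType) (M : nat) (r : R) (psi : bits M -> R[i]) : Prop :=
  exists a : bits M -> R[i],
    (forall s, a s != 0 -> (hweight s)%:R <= r) /\
    (forall y, psi y = \sum_(s : bits M) a s * xket R s y).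

Definition prob_outside (R : realType) (M : nat) (D : R) (psi : bits M -> R[i]) : R :=
  \sum_(y : bits M |
        ~~ ((M%:R * (2^-1 - D) <= (hweight y)%:R) && ((hweight y)%:R <= M%:R * (2^-1 + D))))
     sqnorm (psi y).

(* Main.v *)
Require Import Defs.
From HB Require Import structures.
From mathcomp Require Import all_boot all_order all_algebra all_reals complex.
From mathcomp Require Import ring lra zify.
Set Implicit Arguments. Unset Strict Implicit.
Import Order.TTheory GRing.Theory Num.Theory.
Local Open Scope ring_scope.
Local Open Scope complex_scope.
Definition kk (R : realType) : R := (Num.sqrt 2)^-1.

Lemma kk2 (R : realType) : kk R ^+ 2 = 2^-1.
Proof. by rewrite /kk exprVn sqr_sqrtr. Qed.

Definition ee (R : realType) M (s y : bits M) : R :=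
  \prod_(i < M) (if s i && y i then - kk R else kk R).

Lemma xketE (R : realType) M (s y : bits M) : xket R s y = (ee R s y)%:C.
Proof.
rewrite /xket /ee rmorph_prod; apply: eq_bigr => i _.
rewrite /ket_minus /ket_plus.
by case: (s i); case: (y i) => //=; rewrite rmorphN.
Qed.

Lemma orth (R : realType) M (s s' : bits M) :
  \sum_(y : bits M) ee R s y * ee R s' y = (s == s')%:R.
Proof.
rewrite /ee.
under eq_bigr do rewrite -big_split /=.
rewrite -(bigA_distr_bigA (fun (i : 'I_M) b =>
    (if s i && b then - kk R else kk R) * (if s' i && b then - kk R else kk R))) /=.
under eq_bigr do rewrite big_bool /=.
have K : kk R * kk R + kk R * kk R = 1 by rewrite -expr2 kk2; field.
have K' : - kk R * kk R + kk R * kk R = 0 by rewrite mulNr addNr.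
have K'' : kk R * - kk R + kk R * kk R = 0 by rewrite mulrN addNr.
case: eqVneq => [<-|ne].
  by apply: big1 => i _; case: (s i) => /=; rewrite ?mulrNN K.
case: (pickP (fun i => s i != s' i)) => [i Hi|H].
  rewrite (bigD1 i) //=.
  by move: Hi; case: (s i); case: (s' i) => //= _; rewrite ?K' ?K'' mul0r.
case/eqP: ne; apply/ffunP => i; move: (H i) => /=; by case: eqP.
Qed.

Lemma parseval (R : realType) M (al : bits M -> R) :
  \sum_(y : bits M) (\sum_(s : bits M) al s * ee R s y) ^+ 2 = \sum_(s : bits M) al s ^+ 2.
Proof.
transitivity (\sum_(y : bits M) \sum_(s : bits M) \sum_(s' : bits M)
                  al s * al s' * (ee R s y * ee R s' y)).
  apply: eq_bigr => y _; rewrite expr2 big_distrl /=; apply: eq_bigr => s _.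
  rewrite big_distrr /=; apply: eq_bigr => s' _; ring.
rewrite exchange_big /=; apply: eq_bigr => s _.
rewrite exchange_big /=.
rewrite (bigD1 s) //= [X in _ + X]big1 ?addr0.
  by rewrite -big_distrr /= orth eqxx mulr1 expr2.
by move=> s' ne; rewrite -big_distrr /= orth eq_sym (negbTE ne) mulr0.
Qed.

Lemma Re_sum (R : realType) (I : finType) (F : I -> R[i]) :
  complex.Re (\sum_i F i) = \sum_i complex.Re (F i).
Proof. by apply: (big_ind2 (fun a b => complex.Re a = b)) => // [[a b] x [c d] y /= <- <-]. Qed.

Lemma Im_sum (R : realType) (I : finType) (F : I -> R[i]) :
  complex.Im (\sum_i F i) = \sum_i complex.Im (F i).
Proof. by apply: (big_ind2 (fun a b => complex.Im a = b)) => // [[a b] x [c d] y /= <- <-]. Qed.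

Lemma Re_mulr (R : realType) (a : R[i]) (r : R) : complex.Re (a * r%:C) = complex.Re a * r.
Proof. by case: a => a b /=; ring. Qed.

Lemma Im_mulr (R : realType) (a : R[i]) (r : R) : complex.Im (a * r%:C) = complex.Im a * r.
Proof. by case: a => a b /=; ring. Qed.

Lemma sqnormE (R : realType) (z : R[i]) : sqnorm z = complex.Re z ^+ 2 + complex.Im z ^+ 2.
Proof. by case: z. Qed.

Lemma ee2 (R : realType) M (s y : bits M) : ee R s y ^+ 2 = 2^-1 ^+ M.
Proof.
rewrite /ee -prodrXl (eq_bigr (fun _ => 2^-1)) ?prodr_const ?card_ord //.
by move=> i _; case: (_ && _); rewrite ?sqrrN kk2.
Qed.
Lemma bern (R : realFieldType) (h : R) (n : nat) : -1 <= h -> 1 + n%:R * h <= (1 + h) ^+ n.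
Proof.
move=> hh; elim: n => [|n IH]; first by rewrite mul0r addr0 expr0.
rewrite exprS -natr1.
have h0 : 0 <= 1 + h by lra.
apply: le_trans (ler_wpM2l h0 IH).
have : 0 <= n%:R * h ^+ 2 by rewrite mulr_ge0 // sqr_ge0.
nra.
Qed.

Lemma xineq (R : realFieldType) (m : nat) (x : R) : (0 < m)%N ->
  x = 1 + (4 * m%:R ^+ 2)^-1 -> 
  1 + x ^+ (2 * m) < 2 * x ^+ m.+1.
Proof.
move=> m0 {x}->.
set h : R := (4 * m%:R ^+ 2)^-1.
set x := 1 + h.
have mr : 1 <= (m%:R : R) by rewrite ler1n.
have h4 : h * (4 * m%:R ^+ 2) = 1 by rewrite mulVf //; apply/lt0r_neq0; nra.
have h0 : 0 < h by rewrite invr_gt0; nra.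
have m2 : 1 <= (m%:R : R) ^+ 2 by rewrite expr_ge1.
have hle : h <= 4^-1.
  have : h * 4 <= h * (4 * m%:R ^+ 2) by apply: ler_wpM2l; [exact: ltW | lra].
  lra.
set p := x ^+ m.
have p1 : 1 <= p by apply: exprn_ege1; rewrite /x; lra.
have Hm : (1 + h) ^+ m * (1 - h) ^+ m <= 1.
  rewrite -exprMn; apply: exprn_ile1; nra.
have Hb := @bern _ (- h) m ltac:(nra).
have mh : m%:R * h <= 4^-1.
  have : m%:R * h * (4 * m%:R) = 1 by rewrite -[RHS]h4; ring.
  nra.
have pb : p * (1 - m%:R * h) <= 1.
  have : p * (1 + m%:R * - h) <= p * (1 - h) ^+ m by apply: ler_wpM2l => //; lra.
  rewrite /p /x -/h in Hm *. nra.
have pb2 : p - 1 <= 2 * (m%:R * h) by nra.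
have sq : (p - 1) ^+ 2 <= h.
  have : (p - 1) ^+ 2 <= (2 * (m%:R * h)) ^+ 2 by rewrite ler_pXn2r // ?nnegrE; nra.
  have : (2 * (m%:R * h)) ^+ 2 = h * (h * (4 * m%:R ^+ 2)) by ring.
  rewrite h4 mulr1.
  lra.
rewrite exprM exprSr.
have -> : (x ^+ 2) ^+ m = p ^+ 2 by rewrite -!exprM mulnC.
rewrite -/p /x -/h.
have -> : (1 + h) ^+ m.+1 = p * (1 + h) by rewrite exprSr.
have : h <= p * h by rewrite ler_peMl // ltW.
nra.
Qed.
Lemma pow_small (R : realType) (u eps : R) : 0 <= u -> u < 1 -> 0 < eps ->
  exists K : nat, forall n, (K <= n)%N -> u ^+ n < eps.
Proof.
move=> u0 u1 e0.
set d := 1 - u.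
have d0 : 0 < d by rewrite /d; lra.
have hb : 0 <= (eps * d)^-1 by rewrite invr_ge0; apply/ltW/mulr_gt0.
exists (Num.Def.archi_bound (eps * d)^-1) => n Hn.
have Hb := archi_boundP hb.
have Hn' : (eps * d)^-1 < n%:R.
  apply: lt_le_trans Hb _; by rewrite ler_nat.
have ud : u * (1 + d) <= 1 by rewrite /d; nra.
have Hpow : u ^+ n * (1 + d) ^+ n <= 1.
  rewrite -exprMn; apply: exprn_ile1; [nra|done].
have Hb2 := @bern _ d n ltac:(lra).
have un0 : 0 <= u ^+ n by apply: exprn_ge0.
have nd : 1 < n%:R * d * eps.
  have : (eps * d)^-1 * (eps * d) = 1 by rewrite mulVf //; apply/lt0r_neq0/mulr_gt0.
  have : (eps * d)^-1 * (eps * d) < n%:R * (eps * d) by rewrite ltr_pM2r //; apply: mulr_gt0.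
  nra.
have h1 : u ^+ n * (1 + n%:R * d) <= u ^+ n * (1 + d) ^+ n by apply: ler_wpM2l.
have h3 := le_trans h1 Hpow.
rewrite mulrDr mulr1 in h3.
have h2 : u ^+ n * (n%:R * d) < n%:R * d * eps by lra.
have N0 : 0 < n%:R * d by nra.
by rewrite -(ltr_pM2r N0) [eps * _]mulrC.
Qed.
Lemma sum_prod (R : comNzRingType) (M : nat) (f : bool -> R) :
  \sum_(y : bits M) \prod_(i < M) f (y i) = (f true + f false) ^+ M.
Proof.
rewrite -(bigA_distr_bigA (fun (i : 'I_M) b => f b)) /=.
by rewrite big_bool prodr_const card_ord.
Qed.

Lemma prod_w (R : comNzRingType) (M : nat) (y : bits M) (c : R) :
  \prod_(i < M) (if y i then c else 1) = c ^+ hweight y.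
Proof. by rewrite -big_mkcond prodr_const /hweight cardsE. Qed.

Lemma hweight_le M (y : bits M) : (hweight y <= M)%N.
Proof. by rewrite /hweight -[X in (_ <= X)%N]card_ord max_card. Qed.

Lemma prod_cw (R : comNzRingType) (M : nat) (y : bits M) (c : R) :
  \prod_(i < M) (if y i then 1 else c) = c ^+ (M - hweight y).
Proof.
rewrite (eq_bigr (fun i => if ~~ y i then c else 1)); last by move=> i _; case: (y i).
rewrite -big_mkcond prodr_const /hweight.
congr (_ ^+ _).
have E := cardC [pred i | y i]; rewrite card_ord in E.
have E2 : #|(fun i => ~~ y i)| = #|[predC [pred i | y i]]|.
  by apply: eq_card => i; rewrite !inE.
rewrite E2.
have E3 : #|[set i | y i]| = #|[pred i | y i]| by apply: eq_card => i; rewrite !inE.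
rewrite E3.
move: E; set a := #|[pred i | y i]|; set b := #|[predC _]| => E; lia.
Qed.

Lemma markov (R : numDomainType) (T : finType) (P : pred T) (f : T -> R) :
  (forall t, 0 <= f t) -> (forall t, P t -> 1 <= f t) -> #|P|%:R <= \sum_t f t.
Proof.
move=> f0 fP.
rewrite -sum1_card natr_sum.
rewrite [X in _ <= X](bigID P) /=.
rewrite -[X in X <= _]addr0; apply: lerD.
  by apply: ler_sum => t Pt; exact: fP.
by apply: sumr_ge0 => t _.
Qed.

Lemma cs (R : realFieldType) (T : finType) (S : pred T) (x : T -> R) :
  (\sum_(t in S) x t) ^+ 2 <= #|S|%:R * \sum_(t in S) x t ^+ 2.
Proof.
have E1 : #|S|%:R * \sum_(t in S) x t ^+ 2 = \sum_(s in S) \sum_(t in S) x t ^+ 2.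
  by rewrite sumr_const mulr_natl.
have E2 : \sum_(s in S) \sum_(t in S) x t ^+ 2 = \sum_(s in S) \sum_(t in S) x s ^+ 2.
  by rewrite exchange_big.
have E3 : (\sum_(t in S) x t) ^+ 2 = \sum_(s in S) \sum_(t in S) x s * x t.
  by rewrite expr2 big_distrl /=; apply: eq_bigr => s _; rewrite big_distrr.
have H : 2 * (\sum_(t in S) x t) ^+ 2 <= 2 * (#|S|%:R * \sum_(t in S) x t ^+ 2).
  have -> : 2 * (#|S|%:R * \sum_(t in S) x t ^+ 2) =
     \sum_(s in S) \sum_(t in S) (x s ^+ 2 + x t ^+ 2).
    rewrite mulr2n mulrDl mul1r {1}E1 E2 E1 -big_split /=.
    by apply: eq_bigr => s _; rewrite -big_split.
  rewrite E3 mulr_sumr; apply: ler_sum => s _; rewrite mulr_sumr; apply: ler_sum => t _.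
  have := sqr_ge0 (x s - x t); nra.
lra.
Qed.
Lemma pars_psi (R : realType) M (psi : bits M -> R[i]) (a : bits M -> R[i]) :
  (forall y, psi y = \sum_(s : bits M) a s * xket R s y) ->
  \sum_y sqnorm (psi y) = \sum_s sqnorm (a s).
Proof.
move=> Hpsi.
under eq_bigr do rewrite Hpsi sqnormE Re_sum Im_sum.
rewrite big_split /=.
under eq_bigr do under eq_bigr do rewrite xketE Re_mulr.
under [X in _ + X = _]eq_bigr do under eq_bigr do rewrite xketE Im_mulr.
rewrite !parseval -big_split /=.
by apply: eq_bigr => s _; rewrite sqnormE.
Qed.

Lemma amp_bound (R : realType) M (S : pred (bits M)) (psi : bits M -> R[i]) (a : bits M -> R[i]) :
  (forall y, psi y = \sum_(s : bits M) a s * xket R s y) ->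
  (forall s, a s != 0 -> S s) ->
  forall y, sqnorm (psi y) <= #|S|%:R * 2^-1 ^+ M * \sum_s sqnorm (a s).
Proof.
move=> Hpsi HS y.
have key : forall f : R[i] -> R, (forall r : R, f 0 = 0) ->
    (\sum_(s : bits M) f (a s) * ee R s y) ^+ 2 <= #|S|%:R * 2^-1 ^+ M * \sum_s f (a s) ^+ 2.
  move=> f f0.
  rewrite (bigID S) /= [X in _ + X]big1 ?addr0; last first.
    move=> s nS; have : a s = 0 by apply/eqP; apply: contraNT nS; exact: HS.
    by move=> ->; rewrite (f0 0) mul0r.
  apply: le_trans (cs _ _) _.
  rewrite -mulrA ler_wpM2l // big_distrr /= [X in _ <= X](bigID S) /=.
  rewrite -[X in X <= _]addr0; apply: lerD; last by apply: sumr_ge0 => s _; apply: mulr_ge0; [apply: exprn_ge0; rewrite invr_ge0 | apply: sqr_ge0].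
  by apply: ler_sum => s _; rewrite exprMn ee2 mulrC.
rewrite Hpsi sqnormE Re_sum Im_sum.
have eR : \sum_s complex.Re (a s * xket R s y) = \sum_s complex.Re (a s) * ee R s y.
  by apply: eq_bigr => s _; rewrite xketE Re_mulr.
have eI : \sum_s complex.Im (a s * xket R s y) = \sum_s complex.Im (a s) * ee R s y.
  by apply: eq_bigr => s _; rewrite xketE Im_mulr.
rewrite eR eI.
have h1 := key (fun z => complex.Re z) (fun _ => erefl).
have h2 := key (fun z => complex.Im z) (fun _ => erefl).
have -> : \sum_s sqnorm (a s) = \sum_s complex.Re (a s) ^+ 2 + \sum_s complex.Im (a s) ^+ 2.
  by rewrite -big_split /=; apply: eq_bigr => s _; rewrite sqnormE.
rewrite mulrDr; exact: lerD.
Qed.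

Lemma tail (R : realFieldType) (M m v : nat) (D : R) :
  1 <= 2 * m%:R * D -> M%:R * (2^-1 + D) < v%:R -> (m.+1 * M <= 2 * m * v)%N.
Proof.
move=> hD hv.
rewrite -(ler_nat R) !natrM -natr1.
have m0 : 0 <= (m%:R : R) by [].
have M0 : 0 <= (M%:R : R) by [].
have h1 : 2 * m%:R * (M%:R * (2^-1 + D)) <= 2 * m%:R * v%:R.
  by apply: ler_wpM2l; [nra | exact: ltW].
have h2 : M%:R * 1 <= M%:R * (2 * m%:R * D) by apply: ler_wpM2l.
have -> : (2%:R : R) = 2 by [].
nra.
Qed.

Lemma core (R : realType) M (K m : nat) (x u D : R) (psi : bits M -> R[i]) :
  (0 < K)%N -> 1 <= x -> 0 < u -> u <= 1 -> 1 <= 2 * m%:R * D ->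
  normalized psi -> in_minus_span (K%:R^-1 * M%:R) psi ->
  prob_outside D psi <=
    2 * ((u ^+ K + 1) / u * ((x ^+ (2 * m) + 1) / (2 * x ^+ m.+1))) ^+ M.
Proof.
move=> K0 x1 u0 u1 hD Hnorm [a [Ha Hpsi]].
pose S := [pred s : bits M | (K * hweight s <= M)%N].
have HS : forall s, a s != 0 -> S s.
  move=> s /Ha; rewrite ler_pdivlMl ?ltr0n // -natrM ler_nat => h.
  by rewrite inE.
have Hn : \sum_s sqnorm (a s) = 1 by rewrite -(pars_psi Hpsi).
have Hamp := amp_bound Hpsi HS; rewrite Hn in Hamp.
have x0 : 0 < x by lra.
pose X := x ^+ (2 * m).
pose Z := x ^+ (m.+1 * M).
have Z0 : 0 < Z by rewrite exprn_gt0.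
pose f (y : bits M) := (X ^+ hweight y + X ^+ (M - hweight y)) / Z.
have f0 : forall y, 0 <= f y.
  move=> y; apply: divr_ge0; last exact: ltW.
  by apply: addr_ge0; apply: exprn_ge0; apply: exprn_ge0; lra.
have XZ : forall v, (m.+1 * M <= 2 * m * v)%N -> 1 <= X ^+ v / Z.
  move=> v hv; rewrite ler_pdivlMr // mul1r /X -exprM.
  exact: ler_weXn2l.
have f1 : forall y : bits M,
    ~~ ((M%:R * (2^-1 - D) <= (hweight y)%:R) && ((hweight y)%:R <= M%:R * (2^-1 + D))) ->
    1 <= f y.
  move=> y; rewrite negb_and -!ltNge => /orP [h|h].
    have hw := hweight_le y.
    have : (M - hweight y)%:R > M%:R * (2^-1 + D) :> R.
      rewrite natrB //; nra.
    move=> /(tail hD) /XZ; rewrite /f mulrDl => h2.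
    by apply: le_trans h2 _; rewrite lerDr; apply: divr_ge0; [apply: exprn_ge0; apply: exprn_ge0; lra | exact: ltW].
  move: h => /(tail hD) /XZ; rewrite /f mulrDl => h2.
  by apply: le_trans h2 _; rewrite lerDl; apply: divr_ge0; [apply: exprn_ge0; apply: exprn_ge0; lra | exact: ltW].
have Hsum_f : \sum_y f y = 2 * (X + 1) ^+ M / Z.
  rewrite -big_distrl /= big_split /=.
  under eq_bigr do rewrite -prod_w.
  under [X in _ + X]eq_bigr do rewrite -prod_cw.
  rewrite (sum_prod _ (fun b => if b then X else 1)) (sum_prod _ (fun b => if b then 1 else X)) /=.
  by rewrite (addrC 1 X) [in RHS]mulr2n !mulrDl !mul1r.
pose g (s : bits M) := (u ^+ K) ^+ hweight s / u ^+ M.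
have HSc : #|S|%:R <= \sum_s g s.
  apply: markov.
    by move=> s; apply: divr_ge0; apply: exprn_ge0; try apply: exprn_ge0; apply: ltW.
  move=> s; rewrite inE => hs; rewrite /g ler_pdivlMr ?exprn_gt0 // mul1r -exprM.
  by apply: ler_wiXn2l => //; apply: ltW.
have Hsum_g : \sum_s g s = (u ^+ K + 1) ^+ M / u ^+ M.
  by rewrite -big_distrl /=; under eq_bigr do rewrite -prod_w; rewrite (sum_prod _ (fun b => if b then u ^+ K else 1)).
have C0 : 0 <= #|S|%:R * 2^-1 ^+ M :> R.
  by apply: mulr_ge0 => //; apply: exprn_ge0; rewrite invr_ge0.
have step1 : prob_outside D psi <= #|S|%:R * 2^-1 ^+ M * (2 * (X + 1) ^+ M / Z).
  rewrite /prob_outside -Hsum_f mulr_sumr [X in _ <= X](bigID (fun y : bits M => ~~ ((M%:R * (2^-1 - D) <= (hweight y)%:R) && ((hweight y)%:R <= M%:R * (2^-1 + D))))) /=.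
  rewrite -[X in X <= _]addr0; apply: lerD.
    apply: ler_sum => y Hy; apply: le_trans (Hamp y) _.
    by rewrite mulr1 -[X in X <= _]mulr1 ler_wpM2l // f1.
  by apply: sumr_ge0 => y _; apply: mulr_ge0.
rewrite Hsum_g in HSc.
apply: le_trans step1 _.
have T0 : 0 <= 2 * (X + 1) ^+ M / Z.
  apply: divr_ge0; last exact: ltW.
  by apply: mulr_ge0 => //; apply: exprn_ge0; apply: addr_ge0 => //; apply: exprn_ge0; lra.
apply: le_trans (_ : (u ^+ K + 1) ^+ M / u ^+ M * 2^-1 ^+ M * (2 * (X + 1) ^+ M / Z) <= _).
  by apply: ler_wpM2r => //; apply: ler_wpM2r => //; apply: exprn_ge0; rewrite invr_ge0.
rewrite /Z (exprM x m.+1 M) exprMn !expr_div_n exprMn exprVn.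
have ? : u ^+ M != 0 by rewrite expf_neq0 // gt_eqF.
have ? : (x ^+ m.+1) ^+ M != 0 by rewrite expf_neq0 // expf_neq0 // gt_eqF.
have ? : (2 : R) ^+ M != 0 by rewrite expf_neq0 // pnatr_eq0.
rewrite le_eqVlt; apply/orP; left; apply/eqP; field; by apply/and3P.
Qed.

Unset Implicit Arguments.
Local Close Scope complex_scope.

Theorem lemma1 (R : realType) (D : R) (hD : 0 < D) :
  exists c : R, 0 < c /\
  exists eps : nat -> R,
    (forall eta : R, 0 < eta -> exists N : nat, forall M : nat, (N <= M)%N -> `|eps M| <= eta) /\
    exists M0 : nat, forall M : nat, (M0 <= M)%N ->
      forall psi : bits M -> R[i],
        normalized psi -> in_minus_span (c * M%:R) psi ->
        prob_outside D psi <= eps M.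
Proof.
pose m := (Num.Def.archi_bound D^-1).+1.
have hm : D^-1 < m%:R.
  apply: lt_le_trans (archi_boundP _) _; first by rewrite invr_ge0 ltW.
  by rewrite ler_nat.
have hmD : 1 <= 2 * m%:R * D.
  have : D^-1 * D < m%:R * D by rewrite ltr_pM2r.
  rewrite mulVf ?gt_eqF //; nra.
have m0 : (0 < m)%N by [].
pose x : R := 1 + (4 * m%:R ^+ 2)^-1.
have hx := xineq m0 (erefl x).
have x1 : 1 <= x.
  rewrite /x lerDl invr_ge0; apply: mulr_ge0 => //; exact: sqr_ge0.
have xm0 : 0 < 2 * x ^+ m.+1 by apply: mulr_gt0 => //; apply: exprn_gt0; lra.
pose rho := (x ^+ (2 * m) + 1) / (2 * x ^+ m.+1).
have rho0 : 0 < rho.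
  apply: divr_gt0 => //; apply: ltr_pwDr => //; apply: exprn_ge0; lra.
have rho1 : rho < 1 by rewrite /rho ltr_pdivrMr // mul1r addrC.
pose u := (1 + rho) / 2.
have u0 : 0 < u by rewrite /u; lra.
have u1 : u < 1 by rewrite /u; lra.
have urho : rho < u by rewrite /u; lra.
have urp : 0 < u - rho by lra.
have [K0 HK0] := pow_small (ltW u0) u1 urp.
pose K := K0.+1.
have hK : u ^+ K < u - rho by apply: HK0; rewrite /K leqnSn.
pose q := (u ^+ K + 1) / u * rho.
have q0 : 0 <= q.
  apply: mulr_ge0; last exact: ltW.
  apply: divr_ge0; last exact: ltW.
  by apply: addr_ge0 => //; apply: exprn_ge0; apply: ltW.
have q1 : q < 1.
  rewrite /q mulrAC ltr_pdivrMr // mul1r.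
  have : u ^+ K <= 1 by apply: exprn_ile1; [exact: ltW | exact: ltW].
  have : 0 <= u ^+ K by apply: exprn_ge0; apply: ltW.
  nra.
exists K%:R^-1; split; first by rewrite invr_gt0 ltr0n.
exists (fun M => 2 * q ^+ M); split.
  move=> eta eta0.
  have e2 : 0 < eta / 2 by lra.
  have [N HN] := pow_small q0 q1 e2.
  exists N => M hM.
  rewrite ger0_norm; last by apply: mulr_ge0 => //; apply: exprn_ge0.
  have := HN M hM; lra.
exists 0%N => M _ psi Hn Hs.
exact: (core (ltn0Sn K0) x1 u0 (ltW u1) hmD Hn Hs).
Qed.
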